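(* For each $n\in\mathbb N$ let $X_n=\{x_1^n,x_2^n\}$ be a two-point set with metric $d_n(x_1^n,x_2^n)=n$, and put $\alpha_n=\tfrac12$ if $n$ is even, $\alpha_n=\tfrac13$ if $n$ is odd. Define $M_n(x_i^n,x_j^n,0)=0$ and, for $t>0$, $M_n(x_i^n,x_j^n,t)=\alpha_n$ if $t\le d_n(x_i^n,x_j^n)$ and $M_n(x_i^n,x_j^n,t)=1$ if $t>d_n(x_i^n,x_j^n)$. Then each $(X_n,M_n,\cdot)$ (product $t$-norm) is a compact non-Archimedean fuzzy metric space, and the sequence $\{(X_n,M_n,\cdot)\}_n$ satisfies: (1) the constant function $C(s)=\tfrac13$ satisfies $0<C(s)\le\mathrm{diam}_s(X_n)$ for all $s>0$, $n\in\mathbb N$; (2) $\mathrm{Cov}(X_n,\varepsilon,t)\le 2$ for all $t>0$, $0<\varepsilon<1$, $n$; (3) for $t=\tfrac12$ and any $n,m$ with $n=2m$ and any $s$ with $m<s<n$, one has $M_n(x_1^n,x_2^n,s)<M_m(x_1^m,x_2^m,s)$ but $\dfrac{M_n(x_1^n,x_2^n,s)}{M_m(x_1^m,x_2^m,s)}<\dfrac{M_n(x_1^n,x_2^n,t)}{M_m(x_1^m,x_2^m,t)}$; and (4) $\{(X_n,M_n,\cdot)\}_n$ has no subsequence that is Cauchy with respect to $M_{GH}$.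
   Context: A fuzzy metric space $(X,M,\cdot)$ with the product $t$-norm: $M:X\times X\times[0,\infty)\to[0,1]$ with, for all $x,y,z$ and $t,s>0$: (KM1) $M(x,y,0)=0$; (KM2) $M(x,y,t)=1$ for all $t>0$ iff $x=y$; (KM3) symmetry; (KM4) $M(x,y,t)\cdot M(y,z,s)\le M(x,z,t+s)$; (KM5) $M(x,y,\cdot)$ left continuous on $[0,\infty)$. Non-Archimedean: $M(x,z,\max\{t,s\})\ge M(x,y,t)\cdot M(y,z,s)$. Balls $B(x,\varepsilon,t)=\{y: M(x,y,t)>1-\varepsilon\}$ generate the topology. $H_M(A,B,t)=\min\{\inf_{a\in A}\sup_{b\in B}M(a,b,t),\ \inf_{b\in B}\sup_{a\in A}M(a,b,t)\}$. A fuzzy metric on $X\sqcup Y$ is admissible if it restricts to the given ones on $X$ and $Y$; $M_{GH}(X,Y,t)=\sup\{H_M(X,Y,t): M$ admissible non-Archimedean fuzzy metric on $X\sqcup Y$ with the product $t$-norm$\}$. A sequence $(X_n)$ is Cauchy w.r.t. $M_{GH}$ if for every $t>0$, $0<\varepsilon<1$ there is $n_0$ with $M_{GH}(X_n,X_m,t)>1-\varepsilon$ for all $n,m\ge n_0$. $\mathrm{Cov}(X,\varepsilon,t)$ is the minimal cardinality of $C\subseteq X$ with $X=\bigcup_{c\in C}B(c,\varepsilon,t)$; $\mathrm{diam}_s(X)=\inf\{M(x,y,s):x,y\in X\}$. *)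

(* Defs.v *)
From Stdlib Require Import Reals Lra List Bool.
From Coquelicot Require Import Coquelicot.
Open Scope R_scope.

(** sup / inf of a set of values in [0,1] (conventions: sup of empty = 0, inf of empty = 1) *)
Definition Sup01 (E : R -> Prop) : R :=
  match Lub_Rbar E with Finite r => r | p_infty => 1 | m_infty => 0 end.
Definition Inf01 (E : R -> Prop) : R :=
  match Glb_Rbar E with Finite r => r | p_infty => 1 | m_infty => 0 end.

(** Fuzzy metric (Kramosil–Michálek) with the product t-norm; M x y t is only
    meaningful for t >= 0. *)
Definition is_fuzzy_metric {X : Type} (M : X -> X -> R -> R) : Prop :=
  (forall x y t, 0 <= t -> 0 <= M x y t <= 1) /\
  (forall x y, M x y 0 = 0) /\
  (forall x y, (forall t, 0 < t -> M x y t = 1) <-> x = y) /\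
  (forall x y t, 0 <= t -> M x y t = M y x t) /\
  (forall x y z t s, 0 < t -> 0 < s -> M x y t * M y z s <= M x z (t + s)) /\
  (forall x y t, 0 < t -> forall eps, 0 < eps ->
      exists delta, 0 < delta /\
        forall u, 0 <= u -> t - delta < u -> u <= t -> Rabs (M x y u - M x y t) < eps).

Definition non_archimedean {X : Type} (M : X -> X -> R -> R) : Prop :=
  forall x y z t s, 0 < t -> 0 < s -> M x y t * M y z s <= M x z (Rmax t s).

Definition fball {X : Type} (M : X -> X -> R -> R) (x : X) (eps t : R) : X -> Prop :=
  fun y => M x y t > 1 - eps.

Definition fopen {X : Type} (M : X -> X -> R -> R) (U : X -> Prop) : Prop :=
  forall x, U x -> exists eps t, 0 < eps < 1 /\ 0 < t /\
     forall y, fball M x eps t y -> U y.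

Definition fuzzy_compact {X : Type} (M : X -> X -> R -> R) : Prop :=
  forall (I : Type) (U : I -> X -> Prop),
    (forall i, fopen M (U i)) -> (forall x, exists i, U i x) ->
    exists l : list I, forall x, exists i, In i l /\ U i x.

(** Covering number Cov(X, eps, t) (an extended real; p_infty if no finite cover) *)
Definition Cov {X : Type} (M : X -> X -> R -> R) (eps t : R) : Rbar :=
  Glb_Rbar (fun r => exists C : list X, NoDup C /\
     (forall y, exists c, In c C /\ fball M c eps t y) /\ r = INR (length C)).

Definition diam {X : Type} (M : X -> X -> R -> R) (s : R) : R :=
  Inf01 (fun r => exists x y, r = M x y s).

Definition H_M {Z : Type} (M : Z -> Z -> R -> R) (A B : Z -> Prop) (t : R) : R :=
  Rmin (Inf01 (fun r => exists a, A a /\ r = Sup01 (fun q => exists b, B b /\ q = M a b t)))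
       (Inf01 (fun r => exists b, B b /\ r = Sup01 (fun q => exists a, A a /\ q = M a b t))).

Definition admissible {X Y : Type} (MX : X -> X -> R -> R) (MY : Y -> Y -> R -> R)
  (M : (X + Y) -> (X + Y) -> R -> R) : Prop :=
  is_fuzzy_metric M /\ non_archimedean M /\
  (forall a b t, 0 <= t -> M (inl a) (inl b) t = MX a b t) /\
  (forall a b t, 0 <= t -> M (inr a) (inr b) t = MY a b t).

Definition is_inl {X Y : Type} (z : X + Y) : Prop :=
  match z with inl _ => True | inr _ => False end.
Definition is_inr {X Y : Type} (z : X + Y) : Prop :=
  match z with inl _ => False | inr _ => True end.

Definition M_GH {X Y : Type} (MX : X -> X -> R -> R) (MY : Y -> Y -> R -> R) (t : R) : R :=
  Sup01 (fun r => exists M : (X + Y) -> (X + Y) -> R -> R,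
           admissible MX MY M /\ r = H_M M is_inl is_inr t).

Definition GH_Cauchy (X : nat -> Type) (M : forall n, X n -> X n -> R -> R) : Prop :=
  forall t eps, 0 < t -> 0 < eps < 1 ->
    exists n0, forall n m, (n0 <= n)%nat -> (n0 <= m)%nat ->
      M_GH (M n) (M m) t > 1 - eps.

(** The example: X_n = {x_1^n, x_2^n} modelled by bool (x_1 = false, x_2 = true). *)
Definition x1 : bool := false.
Definition x2 : bool := true.
Definition d_n (n : nat) (x y : bool) : R := if Bool.eqb x y then 0 else INR n.
Definition alpha (n : nat) : R := if Nat.even n then 1/2 else 1/3.
Definition M_n (n : nat) (x y : bool) (t : R) : R :=
  if Rle_dec t 0 then 0 else if Rle_dec t (d_n n x y) then alpha n else 1.

(* Main.v *)
Require Import Defs.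
From Stdlib Require Import Reals List.
From Coquelicot Require Import Coquelicot.
From Stdlib Require Import Lra Psatz Classical.
Open Scope R_scope.

Lemma alpha_bnd n : 1/3 <= alpha n <= 1/2.
Proof. unfold alpha; destruct (Nat.even n); lra. Qed.

Lemma d_nonneg n x y : 0 <= d_n n x y.
Proof. unfold d_n; destruct (Bool.eqb x y); [lra | apply pos_INR]. Qed.

Lemma Mpos_bnd n x y t : 0 < t -> 1/3 <= M_n n x y t <= 1.
Proof.
  intros Ht; pose proof (alpha_bnd n); unfold M_n;
  repeat destruct Rle_dec; lra.
Qed.

Lemma M_rng n x y t : 0 <= t -> 0 <= M_n n x y t <= 1.
Proof.
  intros Ht; pose proof (alpha_bnd n); unfold M_n;
  repeat destruct Rle_dec; lra.
Qed.

Lemma M_same n x t : 0 < t -> M_n n x x t = 1.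
Proof.
  intros Ht; unfold M_n, d_n; rewrite Bool.eqb_reflx.
  repeat destruct Rle_dec; lra.
Qed.

Lemma M_diff n x y t : x <> y -> 0 < t -> t <= INR n -> M_n n x y t = alpha n.
Proof.
  intros Hxy Ht Htn; unfold M_n, d_n.
  destruct x, y; try congruence; simpl;
  repeat destruct Rle_dec; lra.
Qed.

Lemma M_diff_big n x y t : INR n < t -> M_n n x y t = 1.
Proof.
  intros Ht; pose proof (pos_INR n); unfold M_n, d_n.
  destruct x, y; simpl; repeat destruct Rle_dec; lra.
Qed.

Lemma Sup01_le (E : R -> Prop) c : (forall x, E x -> x <= c) -> 0 <= c -> Sup01 E <= c.
Proof.
  intros H Hc; unfold Sup01.
  destruct (Lub_Rbar_correct E) as [_ H2].
  specialize (H2 (Finite c)).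
  destruct (Lub_Rbar E); simpl in *; try lra.
  - apply H2. intros x Ex. simpl. apply H; auto.
  - exfalso; apply H2. intros x Ex. simpl. apply H; auto.
Qed.

Lemma Sup01_nn (E : R -> Prop) x : E x -> 0 <= x -> 0 <= Sup01 E.
Proof.
  intros H Hx; unfold Sup01.
  destruct (Lub_Rbar_correct E) as [H1 _].
  specialize (H1 x H).
  destruct (Lub_Rbar E); simpl in *; lra.
Qed.

Lemma Inf01_le (E : R -> Prop) r : E r -> 0 <= r -> Inf01 E <= r.
Proof.
  intros H Hr; unfold Inf01.
  destruct (Glb_Rbar_correct E) as [H1 _].
  specialize (H1 r H).
  destruct (Glb_Rbar E); simpl in *; try lra; contradiction.
Qed.

Lemma Inf01_ge (E : R -> Prop) c : (forall x, E x -> c <= x) -> c <= 1 -> c <= Inf01 E.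
Proof.
  intros H Hc; unfold Inf01.
  destruct (Glb_Rbar_correct E) as [_ H2].
  specialize (H2 (Finite c)).
  destruct (Glb_Rbar E); simpl in *; try lra.
  - apply H2. intros x Ex. simpl. apply H; auto.
  - exfalso; apply H2. intros x Ex. simpl. apply H; auto.
Qed.

Lemma phi_ge1 (phi : nat -> nat) : (1 <= phi 0%nat)%nat ->
  (forall k, (phi k < phi (S k))%nat) -> forall k, (1 <= phi k)%nat.
Proof.
  intros H0 Hs k; induction k; auto. specialize (Hs k); lia.
Qed.

Theorem mainTheorem9 :
  (forall n : nat, (1 <= n)%nat ->
     is_fuzzy_metric (M_n n) /\ non_archimedean (M_n n) /\ fuzzy_compact (M_n n)) /\
  (* (1) *)
  (let C := fun s : R => 1/3 in
   forall s n, 0 < s -> (1 <= n)%nat -> 0 < C s /\ C s <= diam (M_n n) s) /\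
  (* (2) *)
  (forall t eps n, 0 < t -> 0 < eps < 1 -> (1 <= n)%nat ->
     Rbar_le (Cov (M_n n) eps t) 2) /\
  (* (3) *)
  (let t := 1/2 in
   forall (n m : nat) (s : R), (1 <= m)%nat -> n = (2 * m)%nat ->
     INR m < s < INR n ->
     M_n n x1 x2 s < M_n m x1 x2 s /\
     M_n n x1 x2 s / M_n m x1 x2 s < M_n n x1 x2 t / M_n m x1 x2 t) /\
  (* (4) *)
  (forall phi : nat -> nat, (1 <= phi 0%nat)%nat ->
     (forall k, (phi k < phi (S k))%nat) ->
     ~ GH_Cauchy (fun _ => bool) (fun k => M_n (phi k))).
Proof.
  split; [|split; [|split; [|split]]].
  - intros n Hn. pose proof (alpha_bnd n) as Ha.
    assert (Hn1 : 1 <= INR n) by (apply le_INR in Hn; simpl in Hn; lra).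
    split; [|split].
    + split; [|split; [|split; [|split; [|split]]]].
      * intros; apply M_rng; auto.
      * intros; unfold M_n; destruct Rle_dec; lra.
      * intros x y; split.
        -- intros H. destruct x, y; try reflexivity; exfalso;
           [ specialize (H 1) | specialize (H 1) ];
           rewrite M_diff in H; try lra; congruence.
        -- intros ->; intros; apply M_same; auto.
      * intros x y t Ht; unfold M_n, d_n; destruct x, y; reflexivity.
      * intros x y z t s Ht Hs; unfold M_n, d_n;
        destruct x, y, z; simpl; repeat destruct Rle_dec; nra.
      * intros x y t Ht eps Heps.
        pose proof (d_nonneg n x y) as Hd.
        destruct (Rle_dec t (d_n n x y)) as [Hle|Hgt].
        -- exists t; split; auto. intros u Hu0 Hu1 Hu2.
           assert (E : M_n n x y u = M_n n x y t)
             by (unfold M_n; repeat destruct Rle_dec; try reflexivity; lra).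
           rewrite E, Rminus_diag_eq, Rabs_R0; auto.
        -- exists (t - d_n n x y); split; [lra|]. intros u Hu0 Hu1 Hu2.
           assert (E : M_n n x y u = M_n n x y t)
             by (unfold M_n; repeat destruct Rle_dec; try reflexivity; lra).
           rewrite E, Rminus_diag_eq, Rabs_R0; auto.
    + intros x y z t s Ht Hs; unfold Rmax; destruct Rle_dec; unfold M_n, d_n;
        destruct x, y, z; simpl; repeat destruct Rle_dec; nra.
    + intros I U _ Hcov.
      destruct (Hcov false) as [i0 H0]; destruct (Hcov true) as [i1 H1].
      exists (i0 :: i1 :: nil). intros x; destruct x.
      * exists i1; simpl; auto.
      * exists i0; simpl; auto.
  - intros C s n Hs Hn; unfold C; split; [lra|].
    apply Inf01_ge; [|lra]. intros r [x [y ->]]. apply Mpos_bnd; auto.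
  - intros t eps n Ht Heps Hn. unfold Cov.
    destruct (Glb_Rbar_correct (fun r => exists C : list bool, NoDup C /\
     (forall y, exists c, In c C /\ fball (M_n n) c eps t y) /\ r = INR (length C)))
      as [H1 _].
    apply H1. exists (false :: true :: nil). split; [|split].
    + constructor; [simpl; intuition congruence|]. constructor; [simpl; auto|constructor].
    + intros y; exists y; split; [destruct y; simpl; auto|].
      unfold fball; rewrite M_same; lra.
    + simpl; lra.
  - intros t n m s Hm -> Hs. unfold t.
    assert (Hev : Nat.even (2 * m) = true) by (rewrite Nat.even_mul; reflexivity).
    assert (Hm1 : 1 <= INR m) by (apply le_INR in Hm; simpl in Hm; lra).
    rewrite mult_INR in Hs. simpl in Hs.
    pose proof (alpha_bnd m) as Ham.
    assert (A2 : alpha (2 * m) = 1/2) by (unfold alpha; rewrite Hev; reflexivity).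
    rewrite (M_diff (2*m) x1 x2 s), (M_diff_big m x1 x2 s),
       (M_diff (2*m) x1 x2 (1/2)), (M_diff m x1 x2 (1/2)), A2;
      try (unfold x1, x2; congruence); try lra.
    + split; [lra|]. unfold Rdiv. rewrite Rinv_1.
      apply Rmult_lt_compat_l; [lra|].
      replace (1 * / 1 * 1) with 1 by field.
      rewrite <- Rinv_1. apply Rinv_lt_contravar; lra.
    + rewrite mult_INR; simpl; lra.
    + rewrite mult_INR; simpl; lra.
  - intros phi H0 Hs HC.
    destruct (HC 1 (1/4)) as [n0 Hn0]; try lra.
    specialize (Hn0 n0 (S n0) (le_n _) (le_S _ _ (le_n _))).
    set (a := phi n0) in *. set (b := phi (S n0)) in *.
    assert (Ha : (1 <= a)%nat) by (apply phi_ge1; auto).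
    assert (Hab : (a < b)%nat) by apply Hs.
    assert (Ha1 : 1 <= INR a) by (apply le_INR in Ha; simpl in Ha; lra).
    assert (Hab' : INR a < INR b) by (apply lt_INR; auto).
    cut (M_GH (M_n a) (M_n b) 1 <= 3/4). { simpl in Hn0. fold a b in Hn0. lra. }
    apply Sup01_le; [|lra].
    intros r [M [[HM [HNA [HX HY]]] ->]].
    destruct HM as [Hrng [_ [_ [Hsym _]]]].
    unfold H_M. eapply Rle_trans; [apply Rmin_l|].
    destruct (classic (exists y, M (inl false) (inr y) 1 > 3/4)) as [[y1 Hy1]|Hno1].
    2:{ apply Rle_trans with (Sup01 (fun q => exists b0 : bool + bool, is_inr b0 /\ q = M (inl false) b0 1)).
        - apply Inf01_le. exists (inl false); split; [exact I|reflexivity].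
          apply (Sup01_nn _ (M (inl false) (inr false) 1)).
          + exists (inr false); split; [exact I|reflexivity].
          + apply Hrng; lra.
        - apply Sup01_le; [|lra]. intros q [[z|z] [Hz ->]]; [contradiction|].
          apply Rnot_gt_le; intro; apply Hno1; eauto. }
    destruct (classic (exists y, M (inl true) (inr y) 1 > 3/4)) as [[y2 Hy2]|Hno2].
    2:{ apply Rle_trans with (Sup01 (fun q => exists b0 : bool + bool, is_inr b0 /\ q = M (inl true) b0 1)).
        - apply Inf01_le. exists (inl true); split; [exact I|reflexivity].
          apply (Sup01_nn _ (M (inl true) (inr false) 1)).
          + exists (inr false); split; [exact I|reflexivity].
          + apply Hrng; lra.
        - apply Sup01_le; [|lra]. intros q [[z|z] [Hz ->]]; [contradiction|].
          apply Rnot_gt_le; intro; apply Hno2; eauto. }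
    exfalso. pose proof (alpha_bnd a). pose proof (alpha_bnd b).
    destruct (Bool.bool_dec y1 y2) as [<-|Hne].
    + pose proof (HNA (inl false) (inr y1) (inl true) 1 1 ltac:(lra) ltac:(lra)) as K.
      rewrite Rmax_left in K by lra.
      rewrite HX in K by lra. rewrite M_diff in K by (try congruence; lra).
      rewrite (Hsym (inr y1) (inl true)) in K by lra. nra.
    + pose proof (HNA (inr y1) (inl false) (inr y2) 1 (INR b) ltac:(lra) ltac:(lra)) as K1.
      rewrite Rmax_right in K1 by lra.
      rewrite HY in K1 by lra. rewrite M_diff in K1 by (auto; lra).
      pose proof (HNA (inl false) (inl true) (inr y2) (INR b) 1 ltac:(lra) ltac:(lra)) as K2.
      rewrite Rmax_left in K2 by lra.
      rewrite HX in K2 by lra. rewrite M_diff_big in K2 by lra.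
      rewrite (Hsym (inr y1) (inl false)) in K1 by lra.
      assert (0 <= M (inl false) (inr y2) (INR b)) by (apply Hrng; lra).
      nra.
Qed.
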